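(* Let $\mathfrak G_{\mathbb N}$ be the infinite undirected graph with vertex set $\mathbb N$ and edges $\{a,a+1\}$ for all $a\in\mathbb N$. For all $a,b,c,d\in\mathbb N$, $$\mathfrak G_{\mathbb N}\models a:b::_P c:d\iff |a-b|=|c-d|.$$
   Context: For undirected graphs (edges are one- or two-element vertex sets, $uEv$ iff $\{u,v\}$ is an edge): path formulas $\pi_0(x,y):\equiv x=y$, $\pi_1(x,y):\equiv xEy$, $\pi_n(x,y):\equiv\exists z_1\ldots z_{n-1}(xEz_1\wedge\cdots\wedge z_{n-1}Ey)$ for $n\ge2$. Path type $\uparrow^P_{\mathfrak G}(a\to b)=\{\pi_n:\mathfrak G\models\pi_n(a,b)\}$; $\uparrow^P_{\mathfrak G}(a\to b:\cdot\, c\to d)=\uparrow^P_{\mathfrak G}(a\to b)\cap\uparrow^P_{\mathfrak G}(c\to d)$. A path formula is trivial iff it lies in $\uparrow^P_{\mathfrak G}(a\to b:\cdot\, c\to d)$ for all vertices $a,b,c,d$; $\emptyset_{\mathfrak G}$ is the set of these. $\mathfrak G\models a\to b:\cdot_P\, c\to d$ iff either $\uparrow^P_{\mathfrak G}(a\to b)\cup\uparrow^P_{\mathfrak G}(c\to d)$ consists only of trivial formulas, or $\uparrow^P_{\mathfrak G}(a\to b:\cdot\, c\to d)$ contains a non-trivial formula and for every vertex $d'$, $\emptyset_{\mathfrak G}\subsetneq\uparrow^P(a\to b:\cdot\, c\to d)\subseteq\uparrow^P(a\to b:\cdot\, c\to d')$ implies $\emptyset_{\mathfrak G}\subsetneq\uparrow^P(a\to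 b:\cdot\, c\to d')\subseteq\uparrow^P(a\to b:\cdot\, c\to d)$. $\mathfrak G\models a:b::_P c:d$ iff $\mathfrak G\models a\to b:\cdot_P\, c\to d$, $b\to a:\cdot_P\, d\to c$, $c\to d:\cdot_P\, a\to b$ and $d\to c:\cdot_P\, b\to a$. *)

(* Defs.v *)
From Stdlib Require Import Arith ZArith.

Fixpoint chain {V : Type} (E : V -> V -> Prop) (k : nat) (x y : V) : Prop :=
  match k with
  | 0 => E x y
  | S k' => exists z, E x z /\ chain E k' z y
  end.

Definition path_formula {V : Type} (E : V -> V -> Prop) (n : nat) (x y : V) : Prop :=
  match n with
  | 0 => x = y
  | S k => chain E k x y
  end.

(* Sets of path formulas are represented as predicates on their index n. *)
Definition ptype {V : Type} (E : V -> V -> Prop) (a b : V) : nat -> Prop :=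
  fun n => path_formula E n a b.

Definition ptype2 {V : Type} (E : V -> V -> Prop) (a b c d : V) : nat -> Prop :=
  fun n => ptype E a b n /\ ptype E c d n.

Definition trivial_pf {V : Type} (E : V -> V -> Prop) : nat -> Prop :=
  fun n => forall a b c d : V, ptype2 E a b c d n.

Definition psubset (X Y : nat -> Prop) : Prop := forall n, X n -> Y n.
Definition pstrict (X Y : nat -> Prop) : Prop := psubset X Y /\ exists n, Y n /\ ~ X n.

Definition arrow_P {V : Type} (E : V -> V -> Prop) (a b c d : V) : Prop :=
  (forall n, ptype E a b n \/ ptype E c d n -> trivial_pf E n)
  \/
  ((exists n, ptype2 E a b c d n /\ ~ trivial_pf E n) /\
   forall d' : V,
     (pstrict (trivial_pf E) (ptype2 E a b c d) /\
      psubset (ptype2 E a b c d) (ptype2 E a b c d')) ->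
     (pstrict (trivial_pf E) (ptype2 E a b c d') /\
      psubset (ptype2 E a b c d') (ptype2 E a b c d))).

Definition analogy_P {V : Type} (E : V -> V -> Prop) (a b c d : V) : Prop :=
  arrow_P E a b c d /\ arrow_P E b a d c /\ arrow_P E c d a b /\ arrow_P E d c b a.

Definition GN_edge (u v : nat) : Prop := v = S u \/ u = S v.

(* Main.v *)
Require Import Defs.
From Stdlib Require Import Arith ZArith Lia.

Definition dist (a b : nat) : nat := (a - b) + (b - a).

Lemma chainE : forall k x y, chain GN_edge k x y <-> exists j, S k = dist x y + 2 * j.
Proof.
  induction k as [|k IH]; intros x y; simpl.
  - unfold GN_edge, dist; split.
    + intros [H|H]; exists 0; lia.
    + intros [j Hj]; lia.
  - split.
    + intros [z [Hz Hc]]. apply IH in Hc. destruct Hc as [j Hj].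
      unfold GN_edge, dist in *.
      destruct (Nat.le_gt_cases (dist x y) (dist z y)) as [Hl|Hl]; unfold dist in Hl.
      * exists (S j). lia.
      * exists j. lia.
    + intros [j Hj]. unfold GN_edge, dist in Hj.
      destruct (lt_eq_lt_dec x y) as [[Hl|He]|Hg].
      * exists (S x). split. unfold GN_edge; lia. apply IH. exists j. unfold dist; lia.
      * exists (S x). split. unfold GN_edge; lia. apply IH. exists (j - 1). unfold dist; lia.
      * exists (x - 1). split. unfold GN_edge; lia. apply IH. exists j. unfold dist; lia.
Qed.

Lemma ptE : forall a b n, ptype GN_edge a b n <-> exists j, n = dist a b + 2 * j.
Proof.
  intros a b [|n]; unfold ptype, path_formula.
  - unfold dist; split; [intros ->; exists 0; lia | intros [j Hj]; lia].
  - apply chainE.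
Qed.

Lemma not_triv : forall n, ~ trivial_pf GN_edge n.
Proof.
  intros n H. destruct (H 0 (S n) 0 0) as [H1 _].
  apply ptE in H1. destruct H1 as [j Hj]. unfold dist in Hj. lia.
Qed.

Lemma arrow_le : forall a b c d, arrow_P GN_edge a b c d -> dist c d <= dist a b.
Proof.
  intros a b c d [H|[[n [Hn _]] H]].
  - exfalso. apply (not_triv (dist a b)). apply H. left. apply ptE. exists 0. lia.
  - destruct (Nat.le_gt_cases (dist c d) (dist a b)) as [Hl|Hg]; [exact Hl|exfalso].
    destruct Hn as [H1 H2]. apply ptE in H1; apply ptE in H2.
    destruct H1 as [j1 Hj1]; destruct H2 as [j2 Hj2].
    destruct (H (c + dist a b)) as [_ Hs].
    + split.
      * split. intros m Hm. exfalso; exact (not_triv m Hm).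
        exists n. split. split; apply ptE; eauto. apply not_triv.
      * intros m [Hm1 Hm2]. split; [exact Hm1|].
        apply ptE in Hm1. apply ptE. destruct Hm1 as [j Hj]. exists j. unfold dist in *; lia.
    + destruct (Hs (dist a b)) as [_ Hc].
      * split; apply ptE; exists 0; unfold dist; lia.
      * apply ptE in Hc. destruct Hc as [j Hj]. lia.
Qed.

Lemma arrow_eq : forall a b c d, dist a b = dist c d -> arrow_P GN_edge a b c d.
Proof.
  intros a b c d He. right. split.
  - exists (dist a b). split. split; apply ptE; exists 0; lia. apply not_triv.
  - intros d' [_ Hs]. split.
    + split. intros m Hm. exfalso; exact (not_triv m Hm).
      exists (dist a b). split. apply Hs. split; apply ptE; exists 0; lia. apply not_triv.
    + intros m [Hm1 Hm2]. split; [exact Hm1|].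
      apply ptE in Hm1. apply ptE. rewrite <- He. exact Hm1.
Qed.

Lemma dist_sym : forall a b, dist a b = dist b a.
Proof. intros; unfold dist; lia. Qed.

Lemma absZ : forall a b, Z.abs (Z.of_nat a - Z.of_nat b) = Z.of_nat (dist a b).
Proof. intros; unfold dist; lia. Qed.

Theorem theorem18 : forall a b c d : nat,
  analogy_P GN_edge a b c d <->
  Z.abs (Z.of_nat a - Z.of_nat b) = Z.abs (Z.of_nat c - Z.of_nat d).
Proof.
  intros a b c d. rewrite !absZ. split.
  - intros [H1 [_ [H3 _]]]. apply arrow_le in H1. apply arrow_le in H3. lia.
  - intros H. assert (He : dist a b = dist c d) by lia.
    repeat split; apply arrow_eq; rewrite ?(dist_sym b a), ?(dist_sym d c); congruence.
Qed.
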